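(* Let $a_0,a_1,b_0,b_1$ be real numbers such that $a(N)=a_1N+a_0>0$ and $b(N)=b_1N+b_0>0$ for all positive integers $N$, and let $k\ge1$ be an integer. Define the polynomial in $N$ $$\mathcal N_k(N):=\sum_{i=0}^{k-1}(-1)^i\binom{k-1}{i}\prod_{j=-k+1}^{-i-1}(2N+a(N)+b(N)+j-2)\prod_{j=-i}^{k-1-i}(N+j)(N+a(N)+j-1)\prod_{j=k-i}^{k-1}(2N+a(N)+b(N)+j-2).$$ Then the degree of $\mathcal N_k(N)$ in $N$ is $2k$.
   Context: Empty products equal $1$. *)

(* Defs.v *)
From mathcomp Require Import all_boot all_order all_algebra.
From mathcomp Require Import all_classical all_reals.
Set Implicit Arguments. Unset Strict Implicit. Unset Printing Implicit Defensive.
Import Order.TTheory GRing.Theory Num.Theory.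
Local Open Scope ring_scope.

Definition zprod (R : nzRingType) (m n : int) (F : int -> R) : R :=
  if (m <= n)%R then \prod_(t < absz (n - m + 1)) F (m + (t : nat)%:Z) else 1.

Definition calN (R : realType) (a0 a1 b0 b1 : R) (k : nat) : {poly R} :=
  let aP := a1%:P * 'X + a0%:P in
  let bP := b1%:P * 'X + b0%:P in
  let S (j : int) : {poly R} := 2%:R * 'X + aP + bP + j%:~R - 2%:R in
  \sum_(i < k)
    ((-1) ^+ i * ('C(k.-1, i))%:R *
     zprod (- (k%:Z) + 1) (- (i%:Z) - 1) S *
     zprod (- (i%:Z)) (k%:Z - 1 - i%:Z)
       (fun j => ('X + j%:~R) * ('X + aP + j%:~R - 1)) *
     zprod (k%:Z - i%:Z) (k%:Z - 1) S).

(* Main.v *)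
Require Import Defs.
From mathcomp Require Import all_boot all_order all_algebra.
From mathcomp Require Import all_classical all_reals.
From mathcomp Require Import zify ring lra.
Import Order.TTheory GRing.Theory Num.Theory.
Local Open Scope ring_scope.
Set Implicit Arguments. Unset Strict Implicit. Unset Printing Implicit Defensive.

Section Good.
Variable R : realType.
Local Notation P := {poly R}.

Lemma coef_top (p q : P) a b : (size p <= a.+1)%N -> (size q <= b.+1)%N ->
  (p * q)`_(a + b) = p`_a * q`_b.
Proof.
move=> sp sq; have ha : (a < (a + b).+1)%N by rewrite ltnS leq_addr.
rewrite coefM (bigD1 (Ordinal ha)) //=.
rewrite addKn big1 ?addr0 // => j /eqP nj.
case: (ltngtP j a) => h.
- rewrite [q`__]nth_default ?mulr0 //; apply: (leq_trans sq); lia.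
- by rewrite nth_default ?mul0r //; apply: (leq_trans sp).
- by case: nj; apply: val_inj.
Qed.

Definition good (K : nat) (f : nat -> P) (t : P) :=
  exists Q : nat -> P, forall s, (s < K)%N ->
    [/\ (size (Q s) <= s.+1)%N, (Q s)`_s = t`_s & forall i, (f i)`_s = (Q s).[i%:R]].

Lemma size_sum_le n (F : 'I_n -> P) m :
  (forall j, (size (F j) <= m)%N) -> (size (\sum_(j < n) F j)%R <= m)%N.
Proof.
move=> H; apply: (big_ind (fun p : P => size p <= m)%N) => //.
  by rewrite size_poly0.
by move=> x y hx hy; apply: (leq_trans (size_add _ _)); rewrite geq_max hx hy.
Qed.

Lemma good_mul K f g tf tg : good K f tf -> good K g tg ->
  good K (fun i => f i * g i) (tf * tg).
Proof.
case=> Q1 H1 [Q2 H2].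
exists (fun s => \sum_(j < s.+1) Q1 j * Q2 (s - j)%N) => s sK.
have HA (j : 'I_s.+1) : (j < K)%N by apply: leq_ltn_trans sK; rewrite -ltnS.
have HB (j : 'I_s.+1) : (s - j < K)%N by apply: leq_ltn_trans sK; rewrite leq_subr.
split.
- apply: size_sum_le => j.
  have [s1 _ _] := H1 j (HA j); have [s2 _ _] := H2 _ (HB j).
  apply: (leq_trans (size_mul_leq _ _)).
  have := ltn_ord j; lia.
- rewrite coef_sum coefM; apply: eq_bigr => j _.
  have [s1 t1 _] := H1 j (HA j); have [s2 t2 _] := H2 _ (HB j).
  have := coef_top s1 s2; rewrite subnKC ?(ltnSE (ltn_ord j)) // => ->.
  by rewrite t1 t2.
- move=> i; rewrite coefM horner_sum; apply: eq_bigr => j _.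
  have [_ _ e1] := H1 j (HA j); have [_ _ e2] := H2 _ (HB j).
  by rewrite hornerM e1 e2.
Qed.

Lemma good_add K f g tf tg : good K f tf -> good K g tg ->
  good K (fun i => f i + g i) (tf + tg).
Proof.
case=> Q1 H1 [Q2 H2]; exists (fun s => Q1 s + Q2 s) => s sK.
have [a1 b1 c1] := H1 s sK; have [a2 b2 c2] := H2 s sK.
split.
- by apply: (leq_trans (size_add _ _)); rewrite geq_max a1 a2.
- by rewrite !coefD b1 b2.
- by move=> i; rewrite coefD hornerD c1 c2.
Qed.

Lemma good_scale K f t (a : R) : good K f t -> good K (fun i => a *: f i) (a *: t).
Proof.
case=> Q H; exists (fun s => a *: Q s) => s sK.
have [a1 b1 c1] := H s sK; split.
- by apply: (leq_trans (size_scale_leq _ _)).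
- by rewrite !coefZ b1.
- by move=> i; rewrite coefZ hornerZ c1.
Qed.

Lemma good_one K : good K (fun _ => 1) 1.
Proof.
exists (fun s => ((1 : P)`_s)%:P) => s sK; split.
- by apply: (leq_trans (size_polyC_leq1 _)).
- by rewrite coefC; case: s {sK} => //= n; rewrite coef1.
- by move=> i; rewrite hornerC.
Qed.

Lemma good_prodn K n (F : 'I_n -> nat -> P) (T : 'I_n -> P) :
  (forall j, good K (F j) (T j)) ->
  good K (fun i => \prod_(j < n) F j i) (\prod_(j < n) T j).
Proof.
elim: n F T => [|n IH] F T H.
  have -> : (fun i => \prod_(j < 0) F j i) = (fun _ => 1).
    by apply: funext => i; rewrite big_ord0.
  by rewrite big_ord0; apply: good_one.
have -> : (fun i => \prod_(j < n.+1) F j i) =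
   (fun i => (\prod_(j < n) F (widen_ord (leqnSn n) j) i) * F ord_max i).
  by apply: funext => i; rewrite big_ord_recr.
rewrite big_ord_recr; apply: good_mul (H _).
by apply: IH => j.
Qed.

Lemma good_sumn K n (F : 'I_n -> nat -> P) (T : 'I_n -> P) :
  (forall j, good K (F j) (T j)) ->
  good K (fun i => \sum_(j < n) F j i) (\sum_(j < n) T j).
Proof.
elim: n F T => [|n IH] F T H.
  have -> : (fun i => \sum_(j < 0) F j i) = (fun _ => 0 *: 1).
    by apply: funext => i; rewrite big_ord0 scale0r.
  by rewrite big_ord0 -(scale0r (1 : P)); apply: good_scale; apply: good_one.
have -> : (fun i => \sum_(j < n.+1) F j i) =
   (fun i => (\sum_(j < n) F (widen_ord (leqnSn n) j) i) + F ord_max i).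
  by apply: funext => i; rewrite big_ord_recr.
rewrite big_ord_recr; apply: good_add (H _).
by apply: IH => j.
Qed.

Lemma good_lin K (a b g : R) :
  good K (fun i => a%:P + (b + g * i%:R) *: 'X) (a%:P + g *: 'X).
Proof.
exists (fun s => if s == 0%N then a%:P else if s == 1%N then b%:P + g *: 'X else 0).
move=> s sK; case: s sK => [|[|s]] sK /=; split.
- by apply: (leq_trans (size_polyC_leq1 _)).
- by rewrite !coefD !coefC !coefZ coefX mulr0 addr0.
- by move=> i; rewrite hornerC !coefD !coefC !coefZ coefX mulr0 addr0.
- by apply: (leq_trans (size_add _ _)); rewrite geq_max (leq_trans (size_polyC_leq1 _)) // (leq_trans (size_scale_leq _ _)) // size_polyX.
- by rewrite !coefD !coefC !coefZ coefX /= add0r.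
- by move=> i; rewrite !hornerE !coefD !coefC !coefZ coefX /= add0r mulr1.
- by rewrite size_poly0.
- by rewrite coef0 !coefD !coefC !coefZ coefX /= mulr0 addr0.
- by move=> i; rewrite horner0 !coefD !coefC !coefZ coefX /= mulr0 addr0.
Qed.

Lemma good_ext K (f g : nat -> P) t : (forall i s, (s < K)%N -> (f i)`_s = (g i)`_s) ->
  good K f t -> good K g t.
Proof.
move=> e [Q H]; exists Q => s sK; have [a b c] := H s sK; split => // i.
by rewrite -e.
Qed.

Lemma good_text K (f : nat -> P) (t t' : P) : (forall s, (s < K)%N -> t`_s = t'`_s) ->
  good K f t -> good K f t'.
Proof.
move=> e [Q H]; exists Q => s sK; have [a b c] := H s sK; split => //.
by rewrite -e.
Qed.

End Good.

Section FD.
Variable R : realType.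
Local Notation P := {poly R}.

Definition Sfd n m (x : R) :=
  \sum_(i < n.+1) (-1) ^+ i * ('C(n, i))%:R * (i%:R + x) ^+ m.

Lemma Sfd0 n x : Sfd n 0 x = (n == 0%N)%:R.
Proof.
rewrite /Sfd.
have := exprBn (1 : R) 1 n; rewrite subrr => e.
have -> : (n == 0%N)%:R = (0 : R) ^+ n by case: n {e} => [|n]; rewrite ?expr0 ?expr0n.
rewrite e; apply: eq_bigr => i _; by rewrite (expr0 (i%:R + x)) !expr1n !mulr1 mulr_natr.
Qed.

Lemma Sfd_step n m x :
  Sfd n.+1 m.+1 x = - (n.+1)%:R * Sfd n m (x + 1) + x * Sfd n.+1 m x.
Proof.
rewrite /Sfd.
have eA : forall i : 'I_n.+2, (-1)^+i * ('C(n.+1,i))%:R * (i%:R + x)^+m.+1 =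
  (-1)^+i * ('C(n.+1,i))%:R * i%:R * (i%:R + x)^+m +
  x * ((-1)^+i * ('C(n.+1,i))%:R * (i%:R + x)^+m).
  by move=> i; rewrite exprS; ring.
rewrite (eq_bigr _ (fun i _ => eA i)) big_split /= -mulr_sumr; congr (_ + _).
rewrite big_ord_recl /= mulr0 mul0r add0r mulr_sumr; apply: eq_bigr => j _.
rewrite /bump /= add1n.
have h' : ('C(n.+1, j.+1))%:R * (j.+1)%:R = (n.+1)%:R * ('C(n,j))%:R :> R.
  by rewrite -!natrM mulnC mul_bin_diag.
transitivity ((-1)^+j * (-1) * (('C(n.+1, j.+1))%:R * (j.+1)%:R) *
    (j%:R + (x + 1))^+m).
  rewrite (_ : (j.+1)%:R + x = j%:R + (x + 1)); last by rewrite -addn1 natrD; ring.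
  by rewrite exprSr; ring.
by rewrite h'; ring.
Qed.

Lemma Sfd_val m : forall n x, (m <= n)%N ->
  Sfd n m x = if m == n then (-1) ^+ n * (n`!)%:R else 0.
Proof.
elim: m => [|m IH] n x le.
  rewrite Sfd0; case: n le => [|n] _ //=; by rewrite expr0 mul1r.
case: n le => [|n] // le.
rewrite Sfd_step !IH //; last by apply: ltnW.
case: (ltngtP m n) le => h le'.
- have e1 : (m == n) = false by apply/negbTE; rewrite neq_ltn h.
  have e2 : (m == n.+1) = false by apply/negbTE; rewrite neq_ltn ltnS ltnW.
  by rewrite eqSS e1 e2 mulr0 mulr0 addr0.
- by rewrite ltnS leqNgt h in le'.
- rewrite h; have e2 : (n == n.+1) = false by apply/negbTE; rewrite neq_ltn ltnSn.
  rewrite eqxx e2 mulr0 addr0 factS natrM exprS; ring.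
Qed.

Lemma fd n (q : P) : (size q <= n.+1)%N ->
  \sum_(i < n.+1) (-1) ^+ i * ('C(n, i))%:R * q.[i%:R] = (-1) ^+ n * (n`!)%:R * q`_n.
Proof.
move=> sq.
transitivity (\sum_(m < n.+1) q`_m * Sfd n m 0).
  rewrite /Sfd.
  under eq_bigr do rewrite (horner_coef_wide _ sq) mulr_sumr.
  rewrite exchange_big /=; apply: eq_bigr => m _; rewrite mulr_sumr.
  by apply: eq_bigr => i _; rewrite addr0; ring.
rewrite big_ord_recr /= big1 ?add0r.
  by rewrite Sfd_val // eqxx; ring.
move=> m _; rewrite Sfd_val ?ifF ?mulr0 //; last by apply: ltnW.
by apply/negbTE; rewrite neq_ltn ltn_ord.
Qed.

End FD.

Section Hom.
Variable R : realType.
Local Notation P := {poly R}.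
Variable c : R.

Definition linZ (a b : R) : P := a%:P + b *: 'X.
Definition hfac (a b : R) : P := a *: (1 + 'X) + (b * c) *: 'X.

Definition hom (D : nat) (p : P) : P :=
  \sum_(m < D.+1) p`_m *: ((c *: 'X) ^+ m * (1 + 'X) ^+ (D - m)).

Lemma hom_add D (p q : P) : hom D (p + q) = hom D p + hom D q.
Proof. by rewrite /hom -big_split /=; apply: eq_bigr => m _; rewrite coefD scalerDl. Qed.

Lemma hom_scale D a (p : P) : hom D (a *: p) = a *: hom D p.
Proof. by rewrite /hom scaler_sumr; apply: eq_bigr => m _; rewrite coefZ scalerA. Qed.

Lemma hom_pad D (p : P) : (size p <= D.+1)%N -> hom D.+1 p = (1 + 'X) * hom D p.
Proof.
move=> sp; rewrite /hom big_ord_recr /= [p`__]nth_default // scale0r addr0.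
rewrite mulr_sumr; apply: eq_bigr => m _; rewrite -scalerAr.
congr (_ *: _); rewrite mulrCA; congr (_ * _).
by rewrite subSn ?exprS // -ltnS.
Qed.

Lemma hom_X D (p : P) : hom D.+1 ('X * p) = (c *: 'X) * hom D p.
Proof.
rewrite /hom big_ord_recl /= coefXM eqxx scale0r add0r mulr_sumr.
apply: eq_bigr => m _; rewrite -scalerAr coefXM /= /bump /= add1n.
by congr (_ *: _); rewrite exprS subSS mulrA.
Qed.

Lemma hom_lin D (p : P) a b : (size p <= D.+1)%N ->
  hom D.+1 (linZ a b * p) = hfac a b * hom D p.
Proof.
move=> sp.
have -> : linZ a b * p = a *: p + b *: ('X * p).
  by rewrite /linZ mulrDl mul_polyC -scalerAl.
rewrite hom_add !hom_scale hom_pad // hom_X /hfac.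
by rewrite !scalerAl scalerA -mulrDl.
Qed.

Lemma size_linZ_mul a b (p : P) : (size (linZ a b * p)%R <= (size p).+1)%N.
Proof.
apply: (leq_trans (size_mul_leq _ _)).
have : (size (linZ a b) <= 2)%N.
  apply: (leq_trans (size_add _ _)); rewrite geq_max (leq_trans (size_polyC_leq1 _)) //.
  by apply: (leq_trans (size_scale_leq _ _)); rewrite size_polyX.
case: (size (linZ a b)) => [|[|[|]]] //=; lia.
Qed.

Lemma size_prod_linZ n (A B : nat -> R) D (p : P) : (size p <= D.+1)%N ->
  (size ((\prod_(t < n) linZ (A t) (B t)) * p)%R <= (n + D).+1)%N.
Proof.
elim: n A B => [|n IH] A B sp; first by rewrite big_ord0 mul1r.
rewrite big_ord_recl -mulrA.
apply: (leq_trans (size_linZ_mul _ _ _)); rewrite addSn ltnS.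
have -> : \prod_(i < n) linZ (A (lift ord0 i)) (B (lift ord0 i)) =
          \prod_(i < n) linZ (A i.+1) (B i.+1) by apply: eq_bigr.
exact: (IH (fun t => A t.+1) (fun t => B t.+1)).
Qed.

Lemma hom_prodn n (A B : nat -> R) D (p : P) : (size p <= D.+1)%N ->
  hom (n + D) ((\prod_(t < n) linZ (A t) (B t)) * p) =
  (\prod_(t < n) hfac (A t) (B t)) * hom D p.
Proof.
elim: n A B => [|n IH] A B sp; first by rewrite !big_ord0 !mul1r.
rewrite !big_ord_recl -mulrA addSn.
have -> : \prod_(i < n) linZ (A (lift ord0 i)) (B (lift ord0 i)) =
          \prod_(i < n) linZ (A i.+1) (B i.+1) by apply: eq_bigr.
have -> : \prod_(i < n) hfac (A (lift ord0 i)) (B (lift ord0 i)) =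
          \prod_(i < n) hfac (A i.+1) (B i.+1) by apply: eq_bigr.
rewrite hom_lin; last by have h := size_prod_linZ n (fun t => A t.+1) (fun t => B t.+1) sp; exact h.
by have /= -> := IH (fun t => A t.+1) (fun t => B t.+1) sp; rewrite mulrA.
Qed.

Lemma hom1 D : hom D 1 = (1 + 'X) ^+ D.
Proof.
rewrite /hom big_ord_recl /= coef1 eqxx scale1r expr0 mul1r subn0 big1 ?addr0 //.
by move=> m _; rewrite coef1 /= scale0r.
Qed.



Lemma coef_1X N j : ((1 + 'X : P) ^+ N)`_j = ('C(N, j))%:R.
Proof.
elim: N j => [|N IH] j; first by rewrite expr0 coef1 bin0n.
rewrite exprS mulrDl mul1r coefD coefXM IH; case: j => [|j] /=.
  by rewrite addr0 !bin0.
by rewrite IH binS natrD addrC.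
Qed.

Lemma hom_coef_small D (p : P) j :
  (hom D p)`_j = \sum_(m < D.+1 | (m <= j)%N) p`_m * ((c *: 'X) ^+ m * (1 + 'X) ^+ (D - m))`_j.
Proof.
rewrite /hom coef_sum (bigID (fun m : 'I_D.+1 => (m <= j)%N)) /= [X in _ + X]big1 ?addr0.
  by apply: eq_bigr => m _; rewrite coefZ.
move=> m; rewrite -ltnNge => h; rewrite coefZ exprZn -scalerAl coefZ coefXnM h.
by rewrite !mulr0.
Qed.

Definition Lam k (p : P) : R :=
  \sum_(j < k) (-1) ^+ (k.-1 - j) * (k - j)%:R * (hom (k + k) p)`_j.

Lemma Lam_ext k (p q : P) : (forall m, (m < k)%N -> p`_m = q`_m) -> Lam k p = Lam k q.
Proof.
move=> e; rewrite /Lam; apply: eq_bigr => j _; congr (_ * _).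
rewrite !hom_coef_small; apply: eq_bigr => m mj; rewrite e //.
by apply: leq_ltn_trans mj _.
Qed.

Lemma Lam_add k (p q : P) : Lam k (p + q) = Lam k p + Lam k q.
Proof. by rewrite /Lam -big_split; apply: eq_bigr => j _; rewrite hom_add coefD mulrDr. Qed.

Lemma Lam_scale k a (p : P) : Lam k (a *: p) = a * Lam k p.
Proof.
rewrite /Lam mulr_sumr; apply: eq_bigr => j _; rewrite hom_scale coefZ; ring.
Qed.

Lemma Lam_sum k n (F : 'I_n -> P) : Lam k (\sum_(i < n) F i) = \sum_(i < n) Lam k (F i).
Proof.
elim: n F => [|n IH] F; first by rewrite !big_ord0 -(scale0r 0) Lam_scale mul0r.
by rewrite !big_ord_recr /= Lam_add IH.
Qed.

Lemma alt_sum N :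
  \sum_(l < N.+1) (-1) ^+ (N - l) * (N.+1 - l)%:R * ('C(N.+1, l))%:R = (N == 0%N)%:R :> R.
Proof.
transitivity ((N.+1)%:R * \sum_(l < N.+1) (-1) ^+ (N - l) * ('C(N, l))%:R : R).
  rewrite mulr_sumr; apply: eq_bigr => l _.
  have := mul_bin_down N.+1 l; rewrite /= => h.
  rewrite -mulrA -natrM -h natrM; ring.
have := exprDn (-1 : R) 1 N; rewrite addNr => e.
rewrite (_ : \sum_(l < N.+1) _ = 0 ^+ N).
  by case: N {e} => [|N]; rewrite ?expr0 ?mulr1 // expr0n mulr0.
rewrite e; apply: eq_bigr => l _; rewrite expr1n mulr1 mulr_natr //.
Qed.

Lemma linZ01 : linZ 0 1 = 'X.
Proof. by rewrite /linZ scale1r add0r. Qed.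

Lemma hfac01 : hfac 0 1 = c *: 'X.
Proof. by rewrite /hfac scale0r add0r mul1r. Qed.

Lemma hfacc : hfac c (-1) = c%:P.
Proof.
rewrite /hfac scalerDr mulN1r scaleNr addrK.
by rewrite -mul_polyC mulr1.
Qed.

Lemma hom_Xpsi k a : (a <= k)%N ->
  hom (k + k) ('X^a * \prod_(t < k) linZ c (-1)) =
  c ^+ (a + k) *: ('X^a * (1 + 'X) ^+ (k - a)).
Proof.
move=> ak.
have eX : 'X^a = \prod_(t < a) linZ 0 1 :> P.
  by rewrite linZ01 prodr_const card_ord.
rewrite eX -[X in _ * X]mulr1.
have -> : (k + k = a + (k + (k - a)))%N by lia.
have h1 := hom_prodn a (fun _ => 0) (fun _ => 1)
  (size_prod_linZ k (fun _ => c) (fun _ => -1) (_ : (size (1%R : P) <= (k - a).+1)%N)).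
rewrite /= in h1; rewrite h1 ?size_poly1 //.
have h2 := hom_prodn k (fun _ => c) (fun _ => -1) (_ : (size (1%R : P) <= (k - a).+1)%N).
rewrite /= in h2; rewrite h2 ?size_poly1 // hom1 hfac01 hfacc.
rewrite !prodr_const !card_ord exprZn -polyC_exp mul_polyC.
by rewrite -scalerAl -scalerAr scalerA -exprD linZ01.
Qed.

Lemma Lam_Xpsi k a : (a < k)%N ->
  Lam k ('X^a * \prod_(t < k) linZ c (-1)) = (a == k.-1)%:R * c ^+ (a + k).
Proof.
move=> ak; rewrite /Lam.
under eq_bigr do rewrite hom_Xpsi ?(ltnW ak) // coefZ coefXnM.
have [N eN] : exists N, k = (a + N.+1)%N by exists (k - a).-1; lia.
rewrite eN big_split_ord /= big1 ?add0r; last first.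
  by move=> j _; rewrite /= ltn_ord mulr0 mulr0.
have -> : (a == (a + N.+1).-1) = (N == 0%N) by apply/eqP/eqP; lia.
rewrite -alt_sum mulr_suml; apply: eq_bigr => l _ /=.
have -> : (a + l < a)%N = false by lia.
rewrite coef_1X.
have -> : ((a + N.+1).-1 - (a + l) = N - l)%N by lia.
have -> : ((a + N.+1) - (a + l) = N.+1 - l)%N by lia.
have -> : ((a + N.+1) - a = N.+1)%N by lia.
have -> : ((a + l) - a = l)%N by lia.
ring.
Qed.

Definition altpos (p : P) := forall j, 0 <= (-1) ^+ j * p`_j.

Lemma altpos_mul p q : altpos p -> altpos q -> altpos (p * q).
Proof.
move=> hp hq j; rewrite coefM mulr_sumr; apply: sumr_ge0 => i _.
have e : (-1) ^+ j = (-1) ^+ i * (-1) ^+ (j - i) :> R.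
  by rewrite -exprD subnKC // -ltnS.
by rewrite e mulrACA; apply: mulr_ge0.
Qed.

Lemma hfacE a b : hfac a b = a%:P + (a + b * c) *: 'X.
Proof. by rewrite /hfac scalerDr -mul_polyC mulr1 scalerDl addrA. Qed.

Lemma altpos_hfac a b : 0 <= a -> a + b * c <= 0 -> altpos (hfac a b).
Proof.
move=> ha hb j; rewrite hfacE coefD coefC coefZ coefX.
case: j => [|[|j]] /=; rewrite ?expr0 ?mul1r ?mulr0 ?addr0 ?add0r ?mulr1 //.
  by rewrite expr1 mulN1r oppr_ge0.
by rewrite mulr0.
Qed.

Lemma altpos_prod n (A B : nat -> R) : (forall t, 0 <= A t) ->
  (forall t, A t + B t * c <= 0) -> altpos (\prod_(t < n) hfac (A t) (B t)) /\
  (\prod_(t < n) hfac (A t) (B t))`_0 = \prod_(t < n) A t.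
Proof.
move=> hA hB; elim: n => [|n [IH1 IH2]].
  rewrite !big_ord0 coef1 /=; split => // j; rewrite coef1.
  by case: j => [|j] //=; rewrite ?expr0 ?mul1r ?mulr0.
rewrite !big_ord_recr /=; split.
  by apply: altpos_mul => //; apply: altpos_hfac.
by rewrite coef0M IH2 hfacE coefD coefC coefZ coefX /= mulr0 addr0.
Qed.

Lemma sign_pair n j : (j <= n)%N -> (-1) ^+ n * (-1) ^+ (n - j) = (-1) ^+ j :> R.
Proof.
by move=> h; rewrite -{1}(subnKC h) exprD -mulrA -expr2 sqrr_sign mulr1.
Qed.

Lemma sum_pos k (B : P) : (0 < k)%N -> altpos B -> 0 < B`_0 ->
  0 < (-1) ^+ k.-1 * \sum_(j < k) (-1) ^+ (k.-1 - j) * (k - j)%:R * B`_j.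
Proof.
case: k => // k _ hB h0 /=.
have e : forall j : 'I_k.+1, (-1) ^+ k * ((-1) ^+ (k - j) * (k.+1 - j)%:R * B`_j) =
    (k.+1 - j)%:R * ((-1) ^+ j * B`_j).
  by move=> j; rewrite -(sign_pair (ltnSE (ltn_ord j))); ring.
rewrite mulr_sumr (eq_bigr _ (fun j _ => e j)) big_ord_recl /=.
have p1 : 0 < (k.+1 - 0)%:R * ((-1) ^+ 0 * B`_0) :> R.
  by rewrite subn0 expr0 mul1r; apply: mulr_gt0 => //; rewrite ltr0Sn.
have p2 : 0 <= \sum_(i < k) (k.+1 - bump 0 i)%:R * ((-1) ^+ bump 0 i * B`_(bump 0 i)) :> R.
  by apply: sumr_ge0 => i _; apply: mulr_ge0 => //; apply: hB.
by apply: (lt_le_trans p1); rewrite lerDl.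
Qed.

Lemma Lam_pos k (d : R) : (0 < k)%N -> 1 <= c -> 0 < d -> d <= c ->
  0 < (-1) ^+ k.-1 * Lam k (\prod_(t < k) linZ 1 (-1) * (\prod_(t < k) linZ d (-1) * 1)).
Proof.
move=> k0 c1 d0 dc.
rewrite /Lam.
have -> : (k + k = k + (k + 0))%N by rewrite addn0.
have h1 := hom_prodn k (fun _ => 1) (fun _ => -1)
  (size_prod_linZ k (fun _ => d) (fun _ => -1) (_ : (size (1%R : P) <= 0.+1)%N)).
have h2 := hom_prodn k (fun _ => d) (fun _ => -1) (_ : (size (1%R : P) <= 0.+1)%N).
rewrite /= in h1 h2.
rewrite h1 ?size_poly1 // h2 ?size_poly1 // hom1 expr0 mulr1.
set B := (\prod_(t < k) hfac 1 (-1) * \prod_(t < k) hfac d (-1)).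
clear h1 h2.
have hB : altpos B /\ B`_0 = d ^+ k.
  have [a1 a2] : altpos (\prod_(t < k) hfac 1 (-1)) /\
      (\prod_(t < k) hfac 1 (-1))`_0 = \prod_(t < k) (1 : R).
    by apply: (@altpos_prod k (fun _ => 1) (fun _ => -1)) => t; lra.
  have [b1 b2] : altpos (\prod_(t < k) hfac d (-1)) /\
      (\prod_(t < k) hfac d (-1))`_0 = \prod_(t < k) d.
    by apply: (@altpos_prod k (fun _ => d) (fun _ => -1)) => t; lra.
  rewrite /B; split; first by apply: altpos_mul.
  by rewrite coef0M a2 b2 !prodr_const !card_ord expr1n mul1r.
case: hB => hB hB0; apply: sum_pos => //.
by rewrite hB0 exprn_gt0.
Qed.

End Hom.

Lemma zprod_ord (R0 : nzRingType) (F : int -> R0) (m : int) (L : nat) :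
  zprod m (m + L%:Z - 1) F = \prod_(t < L) F (m + t%:Z).
Proof.
rewrite /zprod; case: L => [|L].
  by rewrite ifF ?big_ord0 //; apply/negbTE; rewrite -ltNge; lia.
rewrite ifT; last by lia.
by have -> : (m + L.+1%:Z - 1 - m + 1 = L.+1%:Z) by lia.
Qed.

Section Main.
Variable R : realType.
Local Notation P := {poly R}.
Variables a0 a1 b0 b1 : R.
Variable n : nat.

Definition cc := 2 + a1 + b1.
Definition sg := a0 + b0 - 2.
Definition dd := 1 + a1.
Definition ee := a0 - 1.

Definition linX (a b : R) : P := a *: 'X + b%:P.

Definition SX (j : int) := linX cc (sg + j%:~R).

Definition termX (i : nat) : P :=
  (\prod_(t < n - i) SX (- n%:Z + t%:Z)) *
  (\prod_(t < n.+1) linX 1 ((- i%:Z + t%:Z)%:~R)) *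
  (\prod_(t < n.+1) linX dd (ee + (- i%:Z + t%:Z)%:~R)) *
  (\prod_(t < i) SX (n.+1%:Z - i%:Z + t%:Z)).

Lemma zprod_ext (F G : int -> P) m m' : (forall j, F j = G j) -> zprod m m' F = zprod m m' G.
Proof. by move=> e; rewrite /zprod; case: ifP => // _; apply: eq_bigr => t _; rewrite e. Qed.

Lemma eS (j : int) : 2 * 'X + (a1%:P * 'X + a0%:P) + (b1%:P * 'X + b0%:P) + j%:~R - 2 = SX j.
Proof.
rewrite /SX /linX /cc /sg -mul_polyC !polyCD polyCN -(rmorph_int (@polyC R)).
rewrite (_ : (2 : R)%:P = 2) ?polyC_natr //; ring.
Qed.

Lemma calN_eq : calN a0 a1 b0 b1 n.+1 =
  \sum_(i < n.+1) ((-1) ^+ i * ('C(n, i))%:R) * termX i.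
Proof.
rewrite /calN /=; apply: eq_bigr => i _.
rewrite !(zprod_ext _ _ eS).
have eM : forall j : int, ('X + j%:~R) * ('X + (a1%:P * 'X + a0%:P) + j%:~R - 1) =
   linX 1 j%:~R * linX dd (ee + j%:~R).
  move=> j; rewrite /linX /dd /ee scale1r -mul_polyC !polyCD polyCN.
  rewrite -(rmorph_int (@polyC R)); ring.
rewrite (zprod_ext _ _ eM).
have ilt := ltn_ord i.
rewrite (_ : - (n.+1)%:Z + 1 = - n%:Z); last by lia.
rewrite (_ : - (i : nat)%:Z - 1 = - n%:Z + (n - i)%N%:Z - 1); last by lia.
rewrite (_ : (n.+1)%:Z - 1 - (i : nat)%:Z = - (i : nat)%:Z + (n.+1)%:Z - 1); last by lia.
rewrite (_ : (n.+1)%:Z - 1 = (n.+1)%:Z - (i : nat)%:Z + (i : nat)%:Z - 1); last by lia.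
rewrite !zprod_ord big_split /= /termX !mulrA.
by congr (_ * _ * _ * _ * _).
Qed.


Definition SZ (j : int) := linZ cc (sg + j%:~R).

Definition termZ (i : nat) : P :=
  (\prod_(t < n - i) SZ (- n%:Z + t%:Z)) *
  (\prod_(t < n.+1) linZ 1 ((- i%:Z + t%:Z)%:~R)) *
  (\prod_(t < n.+1) linZ dd (ee + (- i%:Z + t%:Z)%:~R)) *
  (\prod_(t < i) SZ (n.+1%:Z - i%:Z + t%:Z)).

Definition RP D (p r : P) :=
  [/\ (size p <= D.+1)%N, (size r <= D.+1)%N & forall s, (s <= D)%N -> p`_(D - s) = r`_s].

Lemma RP1 : RP 0 1 1.
Proof. by split; rewrite ?size_poly1 // => s; rewrite leqn0 => /eqP ->. Qed.

Lemma size_linX_mul a b (p : P) : (size (linX a b * p)%R <= (size p).+1)%N.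
Proof.
apply: (leq_trans (size_mul_leq _ _)).
have : (size (linX a b) <= 2)%N.
  apply: (leq_trans (size_add _ _)); rewrite geq_max; apply/andP; split.
    by apply: (leq_trans (size_scale_leq _ _)); rewrite size_polyX.
  by apply: (leq_trans (size_polyC_leq1 _)).
case: (size (linX a b)) => [|[|[|]]] //=; lia.
Qed.

Lemma RP_lin D p r a b : RP D p r -> RP D.+1 (linX a b * p) (linZ a b * r).
Proof.
case=> sp sr e; split.
- by apply: (leq_trans (size_linX_mul _ _ _)).
- by apply: (leq_trans (size_linZ_mul _ _ _)).
have eX : linX a b * p = a *: ('X * p) + b *: p.
  by rewrite /linX mulrDl mul_polyC -scalerAl.
have eZ : linZ a b * r = a *: r + b *: ('X * r).
  by rewrite /linZ mulrDl mul_polyC -scalerAl.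
move=> s hs; rewrite eX eZ !coefD !coefZ !coefXM.
case: s hs => [|s] hs.
  rewrite subn0 /= [p`_D.+1]nth_default // -e // subn0 //.
rewrite subSS.
case: (ltnP s D) => h.
  have -> : ((D - s)%N == 0%N) = false by apply/negbTE; rewrite subn_eq0 -ltnNge.
  rewrite /= (e s (ltnW h)) (_ : ((D - s)%N).-1 = (D - s.+1)%N); last by lia.
  by rewrite e.
have sD : s = D by lia.
subst s; rewrite (e D (leqnn D)) subnn /= [r`_D.+1]nth_default // !mulr0.
Qed.

Lemma RP_prodn L (A B : nat -> R) D p r : RP D p r ->
  RP (L + D) ((\prod_(t < L) linX (A t) (B t)) * p) ((\prod_(t < L) linZ (A t) (B t)) * r).
Proof.
elim: L A B => [|L IH] A B h; first by rewrite !big_ord0 !mul1r.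
rewrite !big_ord_recl -!mulrA addSn.
have -> : \prod_(i < L) linX (A (lift ord0 i)) (B (lift ord0 i)) =
          \prod_(i < L) linX (A i.+1) (B i.+1) by apply: eq_bigr.
have -> : \prod_(i < L) linZ (A (lift ord0 i)) (B (lift ord0 i)) =
          \prod_(i < L) linZ (A i.+1) (B i.+1) by apply: eq_bigr.
apply: RP_lin.
by have := IH (fun t => A t.+1) (fun t => B t.+1) h.
Qed.

Lemma RP_term i : (i <= n)%N -> RP (3 * n + 2) (termX i) (termZ i).
Proof.
move=> hi.
have h1 := RP_prodn i (fun _ => cc) (fun t => sg + (n.+1%:Z - i%:Z + t%:Z)%:~R) RP1.
have h2 := RP_prodn n.+1 (fun _ => dd) (fun t => ee + (- i%:Z + t%:Z)%:~R) h1.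
have h3 := RP_prodn n.+1 (fun _ => 1) (fun t => (- i%:Z + t%:Z)%:~R) h2.
have h4 := RP_prodn (n - i) (fun _ => cc) (fun t => sg + (- n%:Z + t%:Z)%:~R) h3.
have -> : (3 * n + 2 = n - i + (n.+1 + (n.+1 + (i + 0))))%N by lia.
by rewrite /termX /termZ /SX /SZ !mulrA !mulr1 in h4 *.
Qed.

Lemma sgnC i : ((-1) ^+ i * ('C(n, i))%:R : P) = ((-1) ^+ i * ('C(n, i))%:R)%:P.
Proof. by rewrite polyCM polyC_exp polyCN polyC1 polyC_natr. Qed.

Lemma calN_size : (size (calN a0 a1 b0 b1 n.+1) <= (3 * n + 2).+1)%N.
Proof.
rewrite calN_eq; apply: size_sum_le => i; rewrite sgnC mul_polyC.
apply: (leq_trans (size_scale_leq _ _)).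
by have [] := RP_term (ltnSE (ltn_ord i)).
Qed.

Lemma calN_coef s : (s <= 3 * n + 2)%N ->
  (calN a0 a1 b0 b1 n.+1)`_(3 * n + 2 - s) =
  \sum_(i < n.+1) (-1) ^+ i * ('C(n, i))%:R * (termZ i)`_s.
Proof.
move=> hs; rewrite calN_eq coef_sum; apply: eq_bigr => i _.
rewrite sgnC coefCM.
by have [_ _ ->] := RP_term (ltnSE (ltn_ord i)).
Qed.

Definition ZD (i : nat) : P := \prod_(t < n.+1) SZ (- i%:Z + t%:Z).
Definition ZP : P := \prod_(t < n + n.+1) SZ (- n%:Z + t%:Z).
Definition ZM1 (i : nat) : P := \prod_(t < n.+1) linZ 1 ((- i%:Z + t%:Z)%:~R).
Definition ZM2 (i : nat) : P := \prod_(t < n.+1) linZ dd (ee + (- i%:Z + t%:Z)%:~R).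

Lemma termZ_D i : (i <= n)%N -> termZ i * ZD i = ZP * ZM1 i * ZM2 i.
Proof.
move=> hi.
have -> : ZP = (\prod_(t < n - i) SZ (- n%:Z + t%:Z)) * ZD i *
    (\prod_(t < i) SZ (n.+1%:Z - i%:Z + t%:Z)).
  rewrite /ZP /ZD.
  have -> : (n + n.+1 = (n - i) + (n.+1 + i))%N by lia.
  rewrite big_split_ord big_split_ord -mulrA; congr (_ * (_ * _)).
  - by apply: eq_bigr => t _; congr SZ; rewrite /=; lia.
  - by apply: eq_bigr => t _; congr SZ; rewrite /=; lia.
by rewrite /termZ /ZM1 /ZM2; ring.
Qed.

Definition low k (p q : P) := forall j, (j < k)%N -> p`_j = q`_j.

Lemma low_mul k (p q r : P) : low k p q -> low k (p * r) (q * r).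
Proof.
move=> h j hj; rewrite !coefM; apply: eq_bigr => i _; rewrite h //.
by apply: leq_ltn_trans hj; rewrite -ltnS.
Qed.

Lemma low_trans k (p q r : P) : low k p q -> low k q r -> low k p r.
Proof. by move=> h1 h2 j hj; rewrite h1 ?h2. Qed.

Lemma low_sym k (p q : P) : low k p q -> low k q p.
Proof. by move=> h j hj; rewrite h. Qed.

Lemma low_Xn k (g : R) : low k (1 - linZ 0 g ^+ k) 1.
Proof.
move=> j hj; rewrite coefB /linZ add0r exprZn coefZ coefXn.
by rewrite (_ : (j == k) = false) ?mulr0 ?subr0 //; apply/negbTE; rewrite neq_ltn hj.
Qed.

Lemma low_prod k L (F : 'I_L -> P) : (forall t, low k (F t) 1) -> low k (\prod_(t < L) F t) 1.
Proof.
elim: L F => [|L IH] F h; first by rewrite big_ord0.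
rewrite big_ord_recr /=.
apply: (low_trans (q := 1 * F ord_max)); first by apply: low_mul; apply: IH.
by rewrite mul1r.
Qed.

Lemma inv_lin N (c b g : R) : c != 0 -> g * c = - b ->
  linZ c b * \sum_(r < N) c^-1 *: linZ 0 g ^+ r = 1 - linZ 0 g ^+ N.
Proof.
move=> c0 e.
have -> : linZ c b = c *: (1 - linZ 0 g).
  by rewrite /linZ add0r scalerBr alg_polyC scalerA mulrC e scaleNr opprK.
rewrite -scaler_sumr -scalerAl -scalerAr scalerA mulfV // scale1r.
have := subrXX (1 : P) (linZ 0 g) N; rewrite expr1n => ->.
by congr (_ * _); apply: eq_bigr => r _; rewrite expr1n mul1r.
Qed.

Lemma natzR (i : nat) : (i%:Z)%:~R = i%:R :> R.
Proof. by []. Qed.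

Lemma good_exp K (f : nat -> P) (t : P) r : good K f t -> good K (fun i => f i ^+ r) (t ^+ r).
Proof.
move=> h; elim: r => [|r IH].
  have -> : (fun i => f i ^+ 0) = (fun _ => 1 : P) by apply: funext => i; rewrite expr0.
  by rewrite expr0; apply: good_one.
have -> : (fun i => f i ^+ r.+1) = (fun i => f i ^+ r * f i).
  by apply: funext => i; rewrite exprSr.
by rewrite exprSr; apply: good_mul.
Qed.

Lemma good_linprod K L (A B Gm : nat -> R) :
  good K (fun i => \prod_(t < L) linZ (A t) (B t + Gm t * i%:R)) (\prod_(t < L) linZ (A t) (Gm t)).
Proof.
exact: (good_prodn (F := fun t i => linZ (A t) (B t + Gm t * i%:R))
   (T := fun t => linZ (A t) (Gm t)) (fun t => good_lin K (A t) (B t) (Gm t))).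
Qed.

Definition Wf (t : nat) (i : nat) : P :=
  \sum_(r < n.+1) cc^-1 *: linZ 0 (- (sg + t%:R) / cc + cc^-1 * i%:R) ^+ r.
Definition ZDinv i : P := \prod_(t < n.+1) Wf t i.
Definition Gf i : P := ZP * ZM1 i * ZM2 i * ZDinv i.
Definition Wtop : P := \sum_(r < n.+1) cc^-1 *: linZ 0 cc^-1 ^+ r.
Definition Ttop : P := (\prod_(t < n + n.+1) linZ cc 0) * (\prod_(t < n.+1) linZ 1 (-1)) *
   (\prod_(t < n.+1) linZ dd (-1)) * \prod_(t < n.+1) Wtop.

Lemma good_W t : good n.+1 (Wf t) Wtop.
Proof.
rewrite /Wf /Wtop.
apply: (good_sumn (F := fun (r : 'I_n.+1) i => cc^-1 *: linZ 0 (- (sg + t%:R) / cc + cc^-1 * i%:R) ^+ r)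
   (T := fun r => cc^-1 *: linZ 0 cc^-1 ^+ r)) => r.
apply: good_scale; apply: good_exp.
exact: (good_lin n.+1 0 (- (sg + t%:R) / cc) cc^-1).
Qed.

Lemma good_G : good n.+1 Gf Ttop.
Proof.
apply: good_mul; [apply: good_mul; [apply: good_mul|]|].
- have /= h := good_linprod n.+1 (n + n.+1) (fun _ => cc) (fun t => sg + (- n%:Z + t%:Z)%:~R) (fun _ => 0).
  apply: good_ext h => i s _; rewrite /ZP /SZ.
  by under eq_bigr => t _ do rewrite mul0r addr0.
- have /= h := good_linprod n.+1 n.+1 (fun _ => 1) (fun t => t%:R) (fun _ => -1).
  apply: good_ext h => i s _; rewrite /ZM1.
  apply: (congr1 (fun p : P => p`_s)); apply: eq_bigr => t _; congr linZ.
  by rewrite intrD intrN natzR; ring.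
- have /= h := good_linprod n.+1 n.+1 (fun _ => dd) (fun t => ee + t%:R) (fun _ => -1).
  apply: good_ext h => i s _; rewrite /ZM2.
  apply: (congr1 (fun p : P => p`_s)); apply: eq_bigr => t _; congr linZ.
  by rewrite intrD intrN natzR; ring.
- exact: (good_prodn (F := fun (t : 'I_n.+1) i => Wf t i) (T := fun _ => Wtop) (fun t => good_W t)).
Qed.

Lemma low_termZ i : cc != 0 -> (i <= n)%N -> low n.+1 (termZ i) (Gf i).
Proof.
move=> c0 hi.
have hD : low n.+1 (ZD i * ZDinv i) 1.
  rewrite /ZD /ZDinv -big_split /=; apply: low_prod => t.
  rewrite /SZ /Wf inv_lin //; first by apply: low_Xn.
  by rewrite intrD intrN !natzR; field.
have e : Gf i = termZ i * (ZD i * ZDinv i) by rewrite mulrA termZ_D.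
rewrite e; apply: low_sym; rewrite mulrC -[X in low _ _ X]mul1r.
exact: low_mul.
Qed.

Definition G0 : P := \prod_(t < n.+1) linZ 1 (-1) * (\prod_(t < n.+1) linZ dd (-1) * 1).

Lemma Ttop_n : cc != 0 -> Ttop`_n = Lam cc n.+1 G0.
Proof.
move=> c0.
set psi : P := \prod_(t < n.+1) linZ cc (-1).
have h1 : low n.+1 (Ttop * psi) (cc ^+ (n + n.+1) *: G0).
  have -> : Ttop * psi = ((\prod_(t < n + n.+1) linZ cc 0) * (\prod_(t < n.+1) linZ 1 (-1)) *
     (\prod_(t < n.+1) linZ dd (-1))) * \prod_(t < n.+1) (Wtop * linZ cc (-1)).
    by rewrite /Ttop /psi big_split /=; ring.
  have -> : cc ^+ (n + n.+1) *: G0 = ((\prod_(t < n + n.+1) linZ cc 0) * (\prod_(t < n.+1) linZ 1 (-1)) *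
     (\prod_(t < n.+1) linZ dd (-1))) * 1.
    rewrite /G0 !mulr1 -mul_polyC mulrA; congr (_ * _ * _).
    by rewrite [in RHS]/linZ scale0r addr0 prodr_const card_ord polyC_exp.
  rewrite [X in low _ X]mulrC [X in low _ _ X]mulrC; apply: low_mul.
  apply: low_prod => t; rewrite mulrC inv_lin //; first by apply: low_Xn.
  by rewrite mulVf // opprK.
set T' : P := \sum_(a < n.+1) Ttop`_a *: 'X^a.
have h2 : low n.+1 T' Ttop.
  move=> j hj; rewrite /T' coef_sum (bigD1 (Ordinal hj)) //= coefZ coefXn eqxx mulr1.
  rewrite big1 ?addr0 // => a /eqP na; rewrite coefZ coefXn.
  by rewrite (_ : (j == a) = false) ?mulr0 //; apply/negbTE/eqP => ja; apply: na; apply: val_inj.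
have h3 : Lam cc n.+1 (T' * psi) = cc ^+ (n + n.+1) * Lam cc n.+1 G0.
  rewrite -Lam_scale; apply: Lam_ext => m hm.
  by rewrite (low_mul psi h2) ?h1.
have h4 : Lam cc n.+1 (T' * psi) = Ttop`_n * cc ^+ (n + n.+1).
  rewrite /T' mulr_suml Lam_sum.
  under eq_bigr do rewrite -scalerAl Lam_scale Lam_Xpsi //.
  rewrite big_ord_recr /= eqxx mul1r big1 ?add0r //.
  move=> a _; rewrite (_ : (_ == _) = false) ?mul0r ?mulr0 //.
  by apply/negbTE; rewrite neq_ltn /= ltn_ord.
apply: (mulIf (expf_neq0 (n + n.+1) c0)).
by rewrite -h4 h3 mulrC.
Qed.

End Main.

Lemma slope_nonneg (R : realType) (a b : R) :
  (forall N : nat, (0 < N)%N -> 0 < a * N%:R + b) -> 0 <= a.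
Proof.
move=> h; rewrite leNgt; apply/negP => aneg.
set x := b / (- a).
have h1 := h (Num.Def.trunc x).+1 isT.
have h2 := truncnS_gt x.
set M : R := ((Num.Def.trunc x).+1)%:R in h1 h2.
have hx : b = x * (- a) by rewrite /x divfK // oppr_eq0 lt_eqF.
rewrite hx in h1; nra.
Qed.

Unset Implicit Arguments.

Theorem lemma2 (R : realType) (a0 a1 b0 b1 : R) (k : nat) :
  (forall N : nat, (0 < N)%N -> 0 < a1 * N%:R + a0) ->
  (forall N : nat, (0 < N)%N -> 0 < b1 * N%:R + b0) ->
  (1 <= k)%N ->
  (size (calN a0 a1 b0 b1 k)).-1 = (2 * k)%N.
Proof.
move=> ha hb; case: k => // n _.
have a1p := slope_nonneg ha.
have b1p := slope_nonneg hb.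
have c0 : cc a1 b1 != 0 by rewrite /cc; apply/negP => /eqP; lra.
have [Q HQ] := good_G a0 a1 b0 b1 n.
have key : forall s, (s < n.+1)%N ->
  (calN a0 a1 b0 b1 n.+1)`_(3 * n + 2 - s) = (-1) ^+ n * (n`!)%:R * (Q s)`_n.
  move=> s hs; have [sQ tQ eQ] := HQ s hs.
  rewrite calN_coef; last by lia.
  rewrite -fd; last by apply: (leq_trans sQ).
  apply: eq_bigr => i _; rewrite -eQ low_termZ //.
  exact: (ltnSE (ltn_ord i)).
set p := calN a0 a1 b0 b1 n.+1 in key *.
have z : forall s, (s < n)%N -> p`_(3 * n + 2 - s) = 0.
  move=> s hs; rewrite key; last exact: (ltnW hs).
  have [sQ _ _] := HQ s (ltnW hs).
  by rewrite [(Q s)`_n]nth_default ?mulr0 //; apply: (leq_trans sQ).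
have nz : p`_(2 * n.+1) != 0.
  have -> : (2 * n.+1 = 3 * n + 2 - n)%N by lia.
  rewrite key //.
  have [_ tQ _] := HQ n (ltnSn n).
  rewrite tQ Ttop_n //.
  have hpos : 0 < (-1) ^+ n * Lam (cc a1 b1) n.+1 (G0 a1 n).
    by apply: (@Lam_pos R (cc a1 b1) n.+1 (dd a1)) => //; rewrite /cc /dd; lra.
  rewrite (mulrC ((-1) ^+ n)) -mulrA mulf_neq0 ?gt_eqF //.
  by rewrite ltr0n fact_gt0.
have hsz : size p = (2 * n.+1).+1.
  apply/eqP; rewrite eqn_leq; apply/andP; split.
  - apply/leq_sizeP => j hj.
    case: (leqP (3 * n + 3) j) => hj2.
      rewrite nth_default //; apply: leq_trans (calN_size a0 a1 b0 b1 n) _; lia.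
    have := z (3 * n + 2 - j)%N; rewrite (_ : (3 * n + 2 - (3 * n + 2 - j) = j)%N); last by lia.
    by apply; lia.
  - rewrite ltnNge; apply/negP => hle; move: nz.
    by rewrite nth_default ?eqxx.
by rewrite hsz.
Qed.
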